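(* Let $m,n\ge 3$ be integers and fix a vertex $u$ of ${\rm SR}(m,n)$. Then every neighbour $v$ of $u$ lies in at most two maximal cliques of the subgraph induced on the set of neighbours of $u$ (equivalently, in at most two maximal cliques of ${\rm SR}(m,n)$ containing both $u$ and $v$) if and only if $u$ has exactly one nonzero coordinate.
   Context: ${\rm SR}(m,n)$ is the graph whose vertices are the vectors in $\{0,1,2,\dots\}^m$ with coordinate sum $n$, two vertices being adjacent when they differ in precisely two coordinate positions. *)

(* Defs.v *)
From mathcomp Require Import all_boot.
Set Implicit Arguments. Unset Strict Implicit. Unset Printing Implicit Defensive.

(* Vertices of SR(m,n): vectors in {0,1,2,...}^m with coordinate sum n.
   Every coordinate is at most n, so we encode them as finite functions
   'I_m -> 'I_n.+1 (no loss), restricted to coordinate sum n. *)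
Definition SRvert (m n : nat) :=
  {x : {ffun 'I_m -> 'I_n.+1} | \sum_(i < m) (x i : nat) == n}.

Definition coord m n (x : SRvert m n) (i : 'I_m) : nat := val x i.

Definition SRadj m n (x y : SRvert m n) : bool :=
  #|[set i : 'I_m | coord x i != coord y i]| == 2.

Definition SRnbhd m n (u : SRvert m n) : {set SRvert m n} :=
  [set v | SRadj u v].

Definition SRclique m n (K : {set SRvert m n}) : bool :=
  [forall x in K, forall y in K, (x != y) ==> SRadj x y].

Definition nbhd_clique m n (u : SRvert m n) : pred {set SRvert m n} :=
  fun K => (K \subset SRnbhd u) && SRclique K.

Definition nbhd_maxcliques m n (u : SRvert m n) : {set {set SRvert m n}} :=
  [set K | maxset (nbhd_clique u) K].

(* Main.v *)
Require Import Defs.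
From mathcomp Require Import all_boot.
From mathcomp Require Import zify.
Set Implicit Arguments. Unset Strict Implicit. Unset Printing Implicit Defensive.

Section Basics.
Variables m n : nat.
Implicit Types x y u v w : SRvert m n.

Lemma sumc x : \sum_(i < m) coord x i = n.
Proof. by rewrite /coord; apply/eqP; case: x. Qed.

Lemma coord_inj x y : (forall i, coord x i = coord y i) -> x = y.
Proof. move=> H; apply: val_inj; apply/ffunP => i; apply: val_inj; exact: H i. Qed.

Lemma SRadj_sym x y : SRadj x y = SRadj y x.
Proof.
rewrite /SRadj; suff -> : [set i | coord x i != coord y i] = [set i | coord y i != coord x i] by [].
by apply/setP => i; rewrite !inE eq_sym.
Qed.

Lemma coord_le x i : coord x i <= n.
Proof. rewrite -ltnS; exact: ltn_ord. Qed.

Lemma sum_split2 (f : 'I_m -> nat) p q : p != q ->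
  \sum_i f i = f p + f q + \sum_(i | (i != p) && (i != q)) f i.
Proof.
move=> pq; rewrite (bigD1 p) //= (bigD1 q) /=; last by rewrite eq_sym.
by rewrite addnA.
Qed.

Lemma card3 (T : finType) (a b c : T) : a != b -> a != c -> b != c ->
  #|[set a; b; c]| = 3.
Proof.
move=> ab ac bc; rewrite -setUA cardsU1 cards2 bc !inE.
by rewrite (negbTE ab) (negbTE ac).
Qed.

Lemma card3_le (T : finType) (A : {set T}) a b c : a != b -> a != c -> b != c ->
  a \in A -> b \in A -> c \in A -> 3 <= #|A|.
Proof.
move=> ab ac bc aA bA cA; rewrite -(card3 ab ac bc); apply: subset_leq_card.
by apply/subsetP => t; rewrite !inE => /orP[/orP[]|] /eqP->.
Qed.

Definition nb p w q := [/\ q != p, coord w p < n, coord w q = n - coord w p &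
  forall i, i != p -> i != q -> coord w i = 0].

Lemma nbr_form u p w : (forall i, i != p -> coord u i = 0) -> SRadj u w ->
  exists q, nb p w q.
Proof.
move=> hu; move/cards2P => [a [b [ab D]]].
have inD i : (coord u i != coord w i) = (i == a) || (i == b).
  by move/setP: D => /(_ i); rewrite !inE.
have up : coord u p = n.
  have := sumc u; rewrite (bigD1 p) //= big1 ?addn0 // => i; exact: hu.
have [q [qp Dq]] : exists q, q != p /\ forall i, (coord u i != coord w i) = (i == p) || (i == q).
  case: (eqVneq p a) => [pa|pa].
    by exists b; split; [rewrite pa eq_sym | move=> i; rewrite inD pa].
  case: (eqVneq p b) => [pb|pb].
    by exists a; split; [rewrite pb | move=> i; rewrite inD pb orbC].
  exfalso.
  have wp : coord w p = n.
    have := inD p; rewrite (negbTE pa) (negbTE pb) up; case: eqP => //.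
  have wa : coord w a != 0.
    have := inD a; rewrite eqxx hu 1?eq_sym //; case: eqP => // <-.
  have := sumc w; rewrite (sum_split2 _ pa) wp; lia.
have w0 i : i != p -> i != q -> coord w i = 0.
  move=> ip iq; have := Dq i; rewrite (negbTE ip) (negbTE iq) hu //.
  by case: eqP.
have wpn : coord w p != n by rewrite eq_sym -{1}up Dq eqxx.
have pq : p != q by rewrite eq_sym.
have := sumc w; rewrite (sum_split2 _ pq).
rewrite big1; last by move=> i /andP[]; exact: w0.
move=> hs; exists q; split => //; first by have := coord_le w p; lia.
lia.
Qed.

Lemma dirE p w qw q : nb p w qw -> q != p -> (coord w q != 0) = (q == qw).
Proof.
case=> qwp wp wq w0 qp; case: (eqVneq q qw) => [->|qqw]; first by rewrite wq; lia.
by rewrite w0 // eqxx.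
Qed.

Lemma B1 p w w' q : nb p w q -> nb p w' q -> w != w' -> SRadj w w'.
Proof.
case=> qp wp wq w0 [_ wp' wq' w0'] ww.
have pq : coord w p != coord w' p.
  apply: contra ww => /eqP e; apply/eqP/coord_inj => i.
  case: (eqVneq i p) => [->//|ip]; case: (eqVneq i q) => [->|iq]; first by rewrite wq wq' e.
  by rewrite w0 // w0'.
rewrite /SRadj; suff -> : [set i | coord w i != coord w' i] = [set p; q].
  by rewrite cards2 (eq_sym p) qp.
apply/setP => i; rewrite !inE; case: (eqVneq i p) => [->|ip]; first by rewrite pq.
case: (eqVneq i q) => [->|iq]; first by rewrite wq wq'; lia.
by rewrite w0 // w0'.
Qed.

Lemma B2 p w w' q q' : nb p w q -> nb p w' q' -> q != q' ->
  SRadj w w' = (coord w p == coord w' p).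
Proof.
case=> qp wp wq w0 [qp' wp' wq' w0'] qq.
have Hq : coord w q != coord w' q by rewrite wq w0' //; lia.
have Hq' : coord w q' != coord w' q'.
  rewrite wq' w0 //; [lia | by rewrite eq_sym].
rewrite /SRadj; case: (eqVneq (coord w p) (coord w' p)) => e.
  suff -> : [set i | coord w i != coord w' i] = [set q; q'] by rewrite cards2 qq.
  apply/setP => i; rewrite !inE; case: (eqVneq i p) => [->|ip].
    by rewrite e eqxx; apply/esym/negbTE; rewrite negb_or !(eq_sym p) qp qp'.
  case: (eqVneq i q) => [->//|iq]; case: (eqVneq i q') => [->//|iq'].
  by rewrite w0 // w0'.
apply/negbTE; rewrite neq_ltn; apply/orP; right.
by apply: (card3_le (a:=p) (b:=q) (c:=q')); rewrite ?inE // eq_sym.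
Qed.

Lemma forward u : #|[set i | coord u i != 0]| = 1 ->
  forall v, SRadj u v -> #|[set K in nbhd_maxcliques u | v \in K]| <= 2.
Proof.
move/eqP/cards1P => [p Sp].
have hu i : i != p -> coord u i = 0.
  move=> ip; move/setP: Sp => /(_ i); rewrite !inE (negbTE ip); by case: eqP.
move=> v uv; have [q nbv] := nbr_form hu uv.
have [qp vp vq v0] := nbv.
set R := [set w in SRnbhd u | coord w q != 0].
set C := [set w in SRnbhd u | coord w p == coord v p].
have vR : v \in R by rewrite !inE uv vq; lia.
have clR : nbhd_clique u R.
  apply/andP; split; first by apply/subsetP => w; rewrite inE => /andP[].
  apply/forallP => a; apply/implyP; rewrite !inE => /andP[ua aq].
  apply/forallP => b; apply/implyP; rewrite !inE => /andP[ub bq]; apply/implyP => ab.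
  have [qa na] := nbr_form hu ua; have [qb nb'] := nbr_form hu ub.
  move: aq bq; rewrite (dirE na qp) (dirE nb' qp) => /eqP ea /eqP eb.
  by rewrite -ea in na; rewrite -eb in nb'; apply: B1 na nb' ab.
have clC : nbhd_clique u C.
  apply/andP; split; first by apply/subsetP => w; rewrite inE => /andP[].
  apply/forallP => a; apply/implyP; rewrite !inE => /andP[ua /eqP ap].
  apply/forallP => b; apply/implyP; rewrite !inE => /andP[ub /eqP bp]; apply/implyP => ab.
  have [qa na] := nbr_form hu ua; have [qb nb'] := nbr_form hu ub.
  case: (eqVneq qa qb) => [e|ne]; first by rewrite -e in nb'; apply: B1 na nb' ab.
  by rewrite (B2 na nb' ne) ap bp.
apply: (leq_trans (subset_leq_card (_ : _ \subset [set R; C]))); last first.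
  by rewrite cards2; case: (R != C).
apply/subsetP => K; rewrite !inE => /andP[hK vK].
have /andP[Ksub Kcl] := maxsetp hK.
have nbK w : w \in K -> SRadj u w by move/(subsetP Ksub); rewrite inE.
have adjK a b : a \in K -> b \in K -> a != b -> SRadj a b.
  move=> aK bK ab; move/forallP: Kcl => /(_ a); rewrite aK /= => /forallP /(_ b).
  by rewrite bK ab.
have [_ mK] := maxsetP hK.
case: (boolP (K \subset R)) => KR; first by rewrite (mK R clR KR) eqxx.
apply/orP; right; apply/eqP; apply/esym; apply: mK => //.
have [w wK wR] := subsetPn KR.
have uw := nbK w wK; have [qw nbw] := nbr_form hu uw.
have wq : coord w q = 0 by move: wR; rewrite !inE uw /=; case: eqP.
have qqw : q != qw by rewrite -(dirE nbw qp) wq.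
have wv : v != w by apply: contraNneq wR => <-.
have vpw : coord v p = coord w p by apply/eqP; rewrite -(B2 nbv nbw qqw) adjK.
apply/subsetP => w' w'K; rewrite !inE nbK //=.
case: (eqVneq w' v) => [->//|w'v].
have [qw' nbw'] := nbr_form hu (nbK w' w'K).
case: (eqVneq qw' q) => [e|ne].
  have ww' : w != w'.
    by apply: contraNneq wR => ->; rewrite !inE nbK //= (dirE nbw' qp) e eqxx.
  have qq : qw != qw' by rewrite e eq_sym.
  by move: (adjK _ _ wK w'K ww'); rewrite (B2 nbw nbw' qq) vpw eq_sym.
have qq : q != qw' by rewrite eq_sym.
have vw' : v != w' by rewrite eq_sym.
by move: (adjK _ _ vK w'K vw'); rewrite (B2 nbv nbw' qq) eq_sym.
Qed.
End Basics.


Section Three.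
Variables m n : nat.
Implicit Types x y u v w : SRvert m n.

Lemma pair_clique u v w : SRadj u v -> SRadj u w -> SRadj v w ->
  nbhd_clique u [set v; w].
Proof.
move=> uv uw vw; apply/andP; split.
  by apply/subsetP => a; rewrite !inE => /orP[]/eqP->.
apply/forallP => a; apply/implyP; rewrite !inE => ha.
apply/forallP => b; apply/implyP; rewrite !inE => hb; apply/implyP => ab.
move: ha hb ab => /orP[]/eqP-> /orP[]/eqP->; rewrite ?eqxx // SRadj_sym //.
Qed.

Lemma three u v x y z : SRadj u v -> SRadj u x -> SRadj u y -> SRadj u z ->
  SRadj v x -> SRadj v y -> SRadj v z -> x != y -> x != z -> y != z ->
  ~~ SRadj x y -> ~~ SRadj x z -> ~~ SRadj y z ->
  2 < #|[set K in nbhd_maxcliques u | v \in K]|.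
Proof.
move=> uv ux uy uz vx vy vz xy xz yz nxy nxz nyz.
have [Kx mx sx] := maxset_exists (pair_clique uv ux vx).
have [Ky my sy] := maxset_exists (pair_clique uv uy vy).
have [Kz mz sz] := maxset_exists (pair_clique uv uz vz).
have inK (K : {set SRvert m n}) w : [set v; w] \subset K -> (v \in K) * (w \in K).
  by move=> s; split; apply: (subsetP s); rewrite !inE eqxx ?orbT.
have adjK (K : {set SRvert m n}) a b : maxset (nbhd_clique u) K -> a \in K -> b \in K -> a != b -> SRadj a b.
  move=> /maxsetp/andP[_ Kcl] aK bK ab.
  by move/forallP: Kcl => /(_ a); rewrite aK /= => /forallP /(_ b); rewrite bK ab.
have dK (K1 K2 : {set SRvert m n}) a b : maxset (nbhd_clique u) K1 -> [set v; a] \subset K1 ->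
   [set v; b] \subset K2 -> a != b -> ~~ SRadj a b -> K1 != K2.
  move=> m1 s1 s2 ab nab; apply: contra nab => /eqP e.
  by apply: (adjK K1) => //; [rewrite (inK _ _ s1) | rewrite e (inK _ _ s2)].
have memK (K : {set SRvert m n}) w : maxset (nbhd_clique u) K -> [set v; w] \subset K ->
  K \in [set K in nbhd_maxcliques u | v \in K].
  by move=> mK sK; rewrite !inE mK (inK _ _ sK).
apply: (card3_le (a:=Kx) (b:=Ky) (c:=Kz)); last 3 first.
- exact: memK mx sx.
- exact: memK my sy.
- exact: memK mz sz.
- exact: dK mx sx sy xy nxy.
- exact: dK mx sx sz xz nxz.
- exact: dK my sy sz yz nyz.
Qed.
End Three.


Section Mk.
Variables m n : nat.

Lemma le_sum (f : 'I_m -> nat) i : f i <= \sum_k f k.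
Proof. by rewrite (bigD1 i) //= leq_addr. Qed.

Lemma mkv_proof (f : 'I_m -> nat) (H : \sum_i f i = n) :
  \sum_(i < m) (([ffun i => (inord (f i) : 'I_n.+1)] i) : nat) == n.
Proof.
apply/eqP; rewrite -[RHS]H; apply/eq_bigr => i _; rewrite ffunE inordK // ltnS -H.
exact: le_sum.
Qed.

Definition mkv (f : 'I_m -> nat) (H : \sum_i f i = n) : SRvert m n :=
  exist (fun x : {ffun 'I_m -> 'I_n.+1} => \sum_(i < m) (x i : nat) == n) _ (mkv_proof H).

Lemma coord_mkv f (H : \sum_i f i = n) i : coord (mkv H) i = f i.
Proof. by rewrite /coord /= ffunE inordK // ltnS -H; exact: le_sum. Qed.

Variables (u : SRvert m n) (i j l : 'I_m).
Hypotheses (ij : i != j) (il : i != l) (jl : j != l).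

Lemma ijF : (i == j) = false. Proof. exact: negbTE. Qed.
Lemma ilF : (i == l) = false. Proof. exact: negbTE. Qed.
Lemma jlF : (j == l) = false. Proof. exact: negbTE. Qed.
Lemma jiF : (j == i) = false. Proof. by rewrite eq_sym ijF. Qed.
Lemma liF : (l == i) = false. Proof. by rewrite eq_sym ilF. Qed.
Lemma ljF : (l == j) = false. Proof. by rewrite eq_sym jlF. Qed.

Definition Su := coord u i + coord u j + coord u l.

Definition f3 (A B C : nat) (t : 'I_m) : nat :=
  if t == i then A else if t == j then B else if t == l then C else coord u t.

Lemma sum_split3 (f : 'I_m -> nat) :
  \sum_t f t = f i + f j + f l + \sum_(t | (t != i) && (t != j) && (t != l)) f t.
Proof.
rewrite (sum_split2 _ ij) (bigD1 l) /=; last by rewrite (eq_sym l) il (eq_sym l).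
by rewrite !addnA.
Qed.

Lemma f3_sum A B C : A + B + C = Su -> \sum_t f3 A B C t = n.
Proof.
move=> H; have ji : (j == i) = false by rewrite eq_sym (negbTE ij).
have li : (l == i) = false by rewrite eq_sym (negbTE il).
have lj : (l == j) = false by rewrite eq_sym (negbTE jl).
rewrite sum_split3 /f3 !eqxx ji li lj H.
transitivity (\sum_t coord u t); last exact: sumc.
rewrite (sum_split3 (coord u)).
congr (_ + _); apply: eq_bigr => t /andP[/andP[ti tj] tl].
by rewrite (negbTE ti) (negbTE tj) (negbTE tl).
Qed.

Definition mk3 A B C (H : A + B + C = Su) : SRvert m n := mkv (f3_sum H).

Lemma coord_mk3 A B C (H : A + B + C = Su) t : coord (mk3 H) t = f3 A B C t.
Proof. exact: coord_mkv. Qed.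

Lemma u_mk3 : u = mk3 (erefl Su).
Proof.
apply: coord_inj => t; rewrite coord_mk3 /f3.
by case: eqP => [->//|_]; case: eqP => [->//|_]; case: eqP => [->//|_].
Qed.

Lemma D3 A B C A' B' C' (H : A + B + C = Su) (H' : A' + B' + C' = Su) :
  [set t | coord (mk3 H) t != coord (mk3 H') t] =
  [set t | if t == i then A != A' else if t == j then B != B' else
           if t == l then C != C' else false].
Proof.
apply/setP => t; rewrite !inE !coord_mk3 /f3.
by case: (t == i); case: (t == j); case: (t == l); rewrite ?eqxx.
Qed.

Section Adj.
Variables (A B C A' B' C' : nat) (H : A + B + C = Su) (H' : A' + B' + C' = Su).

Ltac simp := rewrite ?eqxx ?ijF ?ilF ?jlF ?jiF ?liF ?ljF.

Lemma adj_ij : A != A' -> B != B' -> C = C' -> SRadj (mk3 H) (mk3 H').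
Proof.
move=> a b c; rewrite /SRadj D3; suff -> : [set t | if t == i then A != A' else if t == j then B != B' else
           if t == l then C != C' else false] = [set i; j] by rewrite cards2 ij.
apply/setP => t; rewrite !inE; case: (eqVneq t i) => [?|ti]; try subst t; simp => //.
case: (eqVneq t j) => [?|tj]; try subst t; simp => //.
by case: (eqVneq t l) => [?|tl]; try subst t; simp; rewrite ?c ?eqxx.
Qed.

Lemma adj_il : A != A' -> B = B' -> C != C' -> SRadj (mk3 H) (mk3 H').
Proof.
move=> a b c; rewrite /SRadj D3; suff -> : [set t | if t == i then A != A' else if t == j then B != B' else
           if t == l then C != C' else false] = [set i; l] by rewrite cards2 il.
apply/setP => t; rewrite !inE; case: (eqVneq t i) => [?|ti]; try subst t; simp => //.
case: (eqVneq t j) => [?|tj]; try subst t; simp; first by rewrite b eqxx.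
by case: (eqVneq t l) => [?|tl]; try subst t; simp.
Qed.

Lemma adj_jl : A = A' -> B != B' -> C != C' -> SRadj (mk3 H) (mk3 H').
Proof.
move=> a b c; rewrite /SRadj D3; suff -> : [set t | if t == i then A != A' else if t == j then B != B' else
           if t == l then C != C' else false] = [set j; l] by rewrite cards2 jl.
apply/setP => t; rewrite !inE; case: (eqVneq t i) => [?|ti]; try subst t; simp; first by rewrite a eqxx.
case: (eqVneq t j) => [?|tj]; try subst t; simp => //.
by case: (eqVneq t l) => [?|tl]; try subst t; simp.
Qed.

Lemma nadj : A != A' -> B != B' -> C != C' ->
  ~~ SRadj (mk3 H) (mk3 H') /\ mk3 H != mk3 H'.
Proof.
move=> a b c; split.
  rewrite /SRadj D3 neq_ltn; apply/orP; right.
  apply: (card3_le ij il jl); rewrite !inE ?eqxx //.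
    by rewrite (eq_sym j) (negbTE ij) b.
  by rewrite (eq_sym l) (negbTE il) (eq_sym l) (negbTE jl) c.
apply: contra a => /eqP e; move: (congr1 (fun x => coord x i) e).
by rewrite /= !coord_mk3 /f3 eqxx => ->.
Qed.
End Adj.
End Mk.
Section Core.
Variables m n : nat.
Variables (u : SRvert m n) (i j l : 'I_m).
Hypotheses (ij : i != j) (il : i != l) (jl : j != l).
Hypotheses (uj1 : 1 <= coord u j) (ul1 : 1 <= coord u l).

Lemma core : (1 <= coord u i) || (2 <= coord u j) ->
  exists v, SRadj u v /\ 2 < #|[set K in nbhd_maxcliques u | v \in K]|.
Proof.
move=> hx.
have H0 : coord u i + coord u j + coord u l = Su u i j l by [].
have Hv : (coord u i).+1 + (coord u j).-1 + coord u l = Su u i j l by rewrite /Su; lia.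
have Hy : (coord u i) + (coord u j).-1 + (coord u l).+1 = Su u i j l by rewrite /Su; lia.
have Hz : (coord u i).+1 + (coord u j) + (coord u l).-1 = Su u i j l by rewrite /Su; lia.
pose u0 := mk3 ij il jl (erefl (Su u i j l)).
have e0 : u0 = u by rewrite /u0 -u_mk3.
pose v := mk3 ij il jl Hv; pose y := mk3 ij il jl Hy; pose z := mk3 ij il jl Hz.
have uv : SRadj u v by rewrite -e0; apply: adj_ij; clear -uj1 ul1 hx; lia.
have uy : SRadj u y by rewrite -e0; apply: adj_jl; clear -uj1 ul1 hx; lia.
have uz : SRadj u z by rewrite -e0; apply: adj_il; clear -uj1 ul1 hx; lia.
have vy : SRadj v y by apply: adj_il; clear -uj1 ul1 hx; lia.
have vz : SRadj v z by apply: adj_jl; clear -uj1 ul1 hx; lia.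
have [nyz yz] : ~~ SRadj y z /\ y != z by apply: nadj; clear -uj1 ul1 hx; lia.
exists v; split => //.
case/orP: hx => hx.
  have Hx : (coord u i).-1 + (coord u j).+1 + coord u l = Su u i j l by rewrite /Su; clear -uj1 ul1 hx; lia.
  pose x := mk3 ij il jl Hx.
  have ux : SRadj u x by rewrite -e0; apply: adj_ij; clear -uj1 ul1 hx; lia.
  have vx : SRadj v x by apply: adj_ij; clear -uj1 ul1 hx; lia.
  have [nxy xy] : ~~ SRadj x y /\ x != y by apply: nadj; clear -uj1 ul1 hx; lia.
  have [nxz xz] : ~~ SRadj x z /\ x != z by apply: nadj; clear -uj1 ul1 hx; lia.
  exact: (three uv ux uy uz vx vy vz xy xz yz nxy nxz nyz).
have Hx : (coord u i).+2 + (coord u j).-2 + coord u l = Su u i j l by rewrite /Su; clear -uj1 ul1 hx; lia.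
pose x := mk3 ij il jl Hx.
have ux : SRadj u x by rewrite -e0; apply: adj_ij; clear -uj1 ul1 hx; lia.
have vx : SRadj v x by apply: adj_ij; clear -uj1 ul1 hx; lia.
have [nxy xy] : ~~ SRadj x y /\ x != y by apply: nadj; clear -uj1 ul1 hx; lia.
have [nxz xz] : ~~ SRadj x z /\ x != z by apply: nadj; clear -uj1 ul1 hx; lia.
exact: (three uv ux uy uz vx vy vz xy xz yz nxy nxz nyz).
Qed.
End Core.


Lemma backward m n (hm : 3 <= m) (hn : 3 <= n) (u : SRvert m n) :
  (forall v : SRvert m n, SRadj u v ->
     #|[set K in nbhd_maxcliques u | v \in K]| <= 2) ->
  #|[set i : 'I_m | coord u i != 0]| = 1.
Proof.
move=> H; set S := [set i : 'I_m | coord u i != 0].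
have inS t : (t \in S) = (coord u t != 0) by rewrite inE.
have fin i j l : i != j -> i != l -> j != l -> 1 <= coord u j -> 1 <= coord u l ->
    (1 <= coord u i) || (2 <= coord u j) -> False.
  move=> ij il jl a b c; have [v [uv big]] := core ij il jl a b c.
  by have := H v uv; rewrite leqNgt big.
have S0 : 0 < #|S|.
  rewrite lt0n; apply/negP => /eqP/cards0_eq S0.
  have := sumc u; rewrite big1 => [|t _]; first lia.
  have : t \notin S by rewrite S0 inE.
  by rewrite inS negbK => /eqP.
apply/eqP; apply: contraT => hS; exfalso.
case: (eqVneq #|S| 2) => [S2|S2].
  move/eqP/cards2P: S2 => [j [l [jl Se]]].
  have hz t : t != j -> t != l -> coord u t = 0.
    move=> tj tl; have : t \notin S by rewrite Se !inE negb_or tj tl.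
    by rewrite inS negbK => /eqP.
  have js : coord u j != 0 by rewrite -inS Se !inE eqxx.
  have ls : coord u l != 0 by rewrite -inS Se !inE eqxx orbT.
  have hsum : coord u j + coord u l = n.
    have := sumc u; rewrite (sum_split2 _ jl) big1 ?addn0 // => t /andP[]; exact: hz.
  have : 0 < #|~: [set j; l]|.
    by have := cardsC [set j; l]; rewrite cards2 jl card_ord; lia.
  case/card_gt0P => i; rewrite !inE negb_or => /andP[ij il].
  case: (leqP 2 (coord u j)) => hj.
    apply: (fin i j l) => //; first lia; first lia.
    by rewrite hj orbT.
  apply: (fin i l j) => //; first by rewrite eq_sym.
    lia. lia. apply/orP; right; lia.
have S3 : 2 < #|S| by lia.
have /card_gt0P [j jS] : 0 < #|S| by lia.
have /card_gt0P [l lS] : 0 < #|S :\ j| by move: S3; rewrite (cardsD1 j) jS; lia.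
have /card_gt0P [i iS] : 0 < #|S :\ j :\ l|.
  by move: S3; rewrite (cardsD1 j) jS (cardsD1 l (S :\ j)) lS; lia.
move: iS lS; rewrite !inE => /andP[il /andP[ij ui]] /andP[lj ul].
move: jS; rewrite inS => uj.
apply: (fin i j l) => //; first by rewrite eq_sym.
  lia. lia. apply/orP; left; lia.
Qed.


Theorem lemma12 (m n : nat) (hm : 3 <= m) (hn : 3 <= n) (u : SRvert m n) :
  (forall v : SRvert m n, SRadj u v ->
     #|[set K in nbhd_maxcliques u | v \in K]| <= 2)
  <-> #|[set i : 'I_m | coord u i != 0]| = 1.
Proof.
split; first exact: backward.
move=> h; exact: forward h.
Qed.
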